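(* Let $(\mathfrak{g}_0,[\cdot,\cdot]_0,\langle\cdot,\cdot\rangle_0)$ be a Euclidean Lie algebra, let $\mu\in\mathbb{R}$, $b\in\mathfrak{g}_0$, and let $K,D:\mathfrak{g}_0\to\mathfrak{g}_0$ be endomorphisms with $K$ skew-symmetric. Let $\mathfrak{g}=\mathbb{R}e\oplus\mathfrak{g}_0\oplus\mathbb{R}\bar e$ with the Lorentzian form $\langle\cdot,\cdot\rangle$ given by $\langle e,e\rangle=\langle\bar e,\bar e\rangle=0$, $\langle e,\bar e\rangle=1$, $\mathfrak{g}_0\perp\{e,\bar e\}$, $\langle\cdot,\cdot\rangle|_{\mathfrak{g}_0}=\langle\cdot,\cdot\rangle_0$, and the skew-symmetric bracket determined by $$[\bar e,e]=\mu e,\quad [\bar e,u]=D(u)+\langle b,u\rangle_0\,e,\quad [u,v]=[u,v]_0+\langle K(u),v\rangle_0\,e,\qquad [e,u]=0,$$ for $u,v\in\mathfrak{g}_0$. Let $\mathrm{ad}^0$ denote the adjoint representation of $\mathfrak{g}_0$. (1) Let $\omega(u,v)=\langle K(u),v\rangle_0$. Then $(\mathfrak{g},[\cdot,\cdot])$ is a Lie algebra if and only if $D$ is a derivation of $\mathfrak{g}_0$, $\omega$ is a $2$-cocycle of $\mathfrak{g}_0$ with values in $\mathbb{R}$ (trivial module), and $KD+D^*K=\mu K+J^0_b$, where $J^0_u(v)=(\mathrm{ad}^0_v)^*(u)$ for $u,v\in\mathfrak{g}_0$. (2) Assume $\mathfrak{g}$ is a Lie algebra, and let $H\in\mathfrak{g}$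 and $H^0\in\mathfrak{g}_0$ be defined by $\mathrm{tr}(\mathrm{ad}_u)=\langle H,u\rangle$ for all $u\in\mathfrak{g}$ and $\mathrm{tr}(\mathrm{ad}^0_v)=\langle H^0,v\rangle_0$ for all $v\in\mathfrak{g}_0$. Then $H=(\mu+\mathrm{tr}(D))e+H^0$. In particular $\mathfrak{g}$ is unimodular if and only if $\mathfrak{g}_0$ is unimodular and $\mathrm{tr}(D)=-\mu$.
   Context: A Euclidean Lie algebra is a finite-dimensional real Lie algebra with a positive definite inner product. Adjoints $F^*$ are taken with respect to $\langle\cdot,\cdot\rangle_0$. Unimodular means all $\mathrm{ad}_u$ are traceless. The bracket not listed ($[e,e]$, $[e,u]$) is zero; the bracket with $e$ is as given. *)

(* Defs.v *)
(* Euclidean Lie algebra g0 = 'rV[R]_n with inner product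
   <u,v>_0 = u *m S *m v^T, S symmetric positive definite.
   Endomorphisms of g0 are matrices acting on the right: F(u) = u *m F. *)
From HB Require Import structures.
From mathcomp Require Import all_boot all_order all_algebra.
Set Implicit Arguments. Unset Strict Implicit. Unset Printing Implicit Defensive.
Import Order.TTheory GRing.Theory Num.Theory.
Local Open Scope ring_scope.

Section Defs.
Variable R : realFieldType.

Definition ip (n : nat) (S : 'M[R]_n) (u v : 'rV[R]_n) : R := (u *m S *m v^T) 0 0.

Definition euclidean_form (n : nat) (S : 'M[R]_n) : Prop :=
  S^T = S /\ (forall u : 'rV[R]_n, u != 0 -> 0 < ip S u u).

(* adjoint of F (acting by u |-> u *m F) w.r.t. ip S:  ip S (u *m F) v = ip S u (v *m adj S F) *)
Definition adj (n : nat) (S F : 'M[R]_n) : 'M[R]_n := S *m F^T *m invmx S.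

Definition skew_sym (n : nat) (S F : 'M[R]_n) : Prop := adj S F = - F.

Definition is_lie (V : lmodType R) (br : V -> V -> V) : Prop :=
  [/\ (forall (a : R) u v w, br (a *: u + v) w = a *: br u w + br v w),
      (forall (a : R) u v w, br u (a *: v + w) = a *: br u v + br u w),
      (forall u, br u u = 0) &
      (forall u v w, br u (br v w) + br v (br w u) + br w (br u v) = 0)].

Definition ad0 (n : nat) (br : 'rV[R]_n -> 'rV[R]_n -> 'rV[R]_n) (v : 'rV[R]_n) : 'M[R]_n :=
  lin1_mx (br v).

Definition derivation (n : nat) (br : 'rV[R]_n -> 'rV[R]_n -> 'rV[R]_n) (D : 'M[R]_n) : Prop :=
  forall u v, br u v *m D = br (u *m D) v + br u (v *m D).

Definition cocycle2 (n : nat) (br : 'rV[R]_n -> 'rV[R]_n -> 'rV[R]_n)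
  (om : 'rV[R]_n -> 'rV[R]_n -> R) : Prop :=
  forall u v w, om (br u v) w + om (br v w) u + om (br w u) v = 0.

Definition J0 (n : nat) (S : 'M[R]_n) (br : 'rV[R]_n -> 'rV[R]_n -> 'rV[R]_n)
  (u v : 'rV[R]_n) : 'rV[R]_n := u *m adj S (ad0 br v).

Definition unimodular (V : lmodType R) (tr_ad : V -> R) : Prop := forall x, tr_ad x = 0.

(* g = R e (+) g0 (+) R ebar, represented as 'rV_(1 + n + 1):
   coordinate 0 = e-coefficient, middle block = g0-component, last = ebar-coefficient *)
Definition gmk (n : nat) (a : R) (u : 'rV[R]_n) (c : R) : 'rV[R]_(1 + n + 1) :=
  row_mx (row_mx (a%:M : 'rV[R]_1) u) (c%:M : 'rV[R]_1).
Definition ge (n : nat) (x : 'rV[R]_(1 + n + 1)) : R := (lsubmx (lsubmx x)) 0 0.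
Definition g0p (n : nat) (x : 'rV[R]_(1 + n + 1)) : 'rV[R]_n := rsubmx (lsubmx x).
Definition gbar (n : nat) (x : 'rV[R]_(1 + n + 1)) : R := (rsubmx x) 0 0.

Definition lform (n : nat) (S : 'M[R]_n) (x y : 'rV[R]_(1 + n + 1)) : R :=
  ge x * gbar y + gbar x * ge y + ip S (g0p x) (g0p y).

(* The bilinear, skew bracket on g determined by
   [ebar,e] = mu e, [ebar,u] = D u + <b,u>_0 e, [u,v] = [u,v]_0 + <K u, v>_0 e,
   [e,u] = 0, [e,e] = [ebar,ebar] = 0.  For x = a e + u + c ebar, y = a' e + v + c' ebar:
   [x,y] = (mu (c a' - a c') + c <b,v> - c' <b,u> + <K u,v>) e + ([u,v]_0 + c D v - c' D u). *)
Definition gbr (n : nat) (S : 'M[R]_n) (br : 'rV[R]_n -> 'rV[R]_n -> 'rV[R]_n)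
  (mu : R) (b : 'rV[R]_n) (K D : 'M[R]_n) (x y : 'rV[R]_(1 + n + 1)) : 'rV[R]_(1 + n + 1) :=
  let a := ge x in let u := g0p x in let c := gbar x in
  let a' := ge y in let v := g0p y in let c' := gbar y in
  gmk (mu * (c * a' - a * c') + c * ip S b v - c' * ip S b u + ip S (u *m K) v)
      (br u v + c *: (v *m D) - c' *: (u *m D))
      0.

Definition adg (n : nat) (S : 'M[R]_n) (br : 'rV[R]_n -> 'rV[R]_n -> 'rV[R]_n)
  (mu : R) (b : 'rV[R]_n) (K D : 'M[R]_n) (x : 'rV[R]_(1 + n + 1)) : 'M[R]_(1 + n + 1) :=
  lin1_mx (gbr S br mu b K D x).

End Defs.

(* Main.v *)
Require Import Defs.
From HB Require Import structures.
From mathcomp Require Import all_boot all_order all_algebra.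
From mathcomp Require Import ring lra.
Import Order.TTheory GRing.Theory Num.Theory.
Local Open Scope ring_scope.

Section Aux.
Variable R : realFieldType.
Variable n : nat.
Implicit Types (a c : R) (u v w : 'rV[R]_n).

Lemma gmk_ge a u c : ge (gmk a u c) = a.
Proof. by rewrite /ge /gmk !row_mxKl mxE eqxx mulr1n. Qed.
Lemma gmk_g0p a u c : g0p (gmk a u c) = u.
Proof. by rewrite /g0p /gmk row_mxKl row_mxKr. Qed.
Lemma gmk_gbar a u c : gbar (gmk a u c) = c.
Proof. by rewrite /gbar /gmk row_mxKr mxE eqxx mulr1n. Qed.
Lemma gmk_eta (x : 'rV[R]_(1 + n + 1)) : x = gmk (ge x) (g0p x) (gbar x).
Proof.
by rewrite /gmk /ge /g0p /gbar -!mx11_scalar !hsubmxK.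
Qed.
Lemma gmk_add a u c a' u' c' : gmk a u c + gmk a' u' c' = gmk (a + a') (u + u') (c + c').
Proof. by rewrite /gmk !add_row_mx !raddfD. Qed.
Lemma gmk_scale k a u c : k *: gmk a u c = gmk (k * a) (k *: u) (k * c).
Proof. by rewrite /gmk !scale_row_mx !scale_scalar_mx. Qed.
Lemma gmk0 : gmk 0 0 0 = 0 :> 'rV[R]_(1 + n + 1).
Proof. by rewrite /gmk !raddf0 !row_mx0. Qed.
Lemma gmk_inj a u c a' u' c' : gmk a u c = gmk a' u' c' -> [/\ a = a', u = u' & c = c'].
Proof.
move=> h; split.
- by rewrite -(gmk_ge a u c) h gmk_ge.
- by rewrite -(gmk_g0p a u c) h gmk_g0p.
- by rewrite -(gmk_gbar a u c) h gmk_gbar.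
Qed.
End Aux.
Set Implicit Arguments. Unset Strict Implicit.
Section IP.
Variable R : realFieldType.
Variable n : nat.
Variable S : 'M[R]_n.
Implicit Types (u v w : 'rV[R]_n).
Lemma ipDl u v w : ip S (u + v) w = ip S u w + ip S v w.
Proof. by rewrite /ip !mulmxDl mxE. Qed.
Lemma ipDr u v w : ip S u (v + w) = ip S u v + ip S u w.
Proof. by rewrite /ip linearD /= mulmxDr mxE. Qed.
Lemma ipZl k u w : ip S (k *: u) w = k * ip S u w.
Proof. by rewrite /ip -!scalemxAl mxE. Qed.
Lemma ipZr k u w : ip S u (k *: w) = k * ip S u w.
Proof. by rewrite /ip linearZ /= -scalemxAr mxE. Qed.
Lemma ipNl u w : ip S (- u) w = - ip S u w.
Proof. by rewrite -scaleN1r ipZl mulN1r. Qed.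
Lemma ipNr u w : ip S u (- w) = - ip S u w.
Proof. by rewrite -scaleN1r ipZr mulN1r. Qed.
Lemma ipBl u v w : ip S (u - v) w = ip S u w - ip S v w.
Proof. by rewrite ipDl ipNl. Qed.
Lemma ipBr u v w : ip S u (v - w) = ip S u v - ip S u w.
Proof. by rewrite ipDr ipNr. Qed.
Lemma ip0l w : ip S 0 w = 0.
Proof. by rewrite /ip !mul0mx mxE. Qed.
Lemma ip0r w : ip S w 0 = 0.
Proof. by rewrite /ip trmx0 mulmx0 mxE. Qed.
Lemma ip_sym u v : S^T = S -> ip S u v = ip S v u.
Proof.
move=> hS; rewrite /ip -[LHS]trace_mx11 -mxtrace_tr !trmx_mul trmxK hS.
by rewrite trace_mx11 mulmxA.
Qed.
Lemma ip_adj F u v : S \in unitmx -> ip S (u *m adj S F) v = ip S u (v *m F).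
Proof.
move=> hU; rewrite /ip /adj !mulmxA -(mulmxA _ (invmx S)) mulVmx // mulmx1.
by rewrite trmx_mul !mulmxA.
Qed.
Lemma ef_unit : euclidean_form S -> S \in unitmx.
Proof.
case=> _ hpos; rewrite unitmxE unitfE; apply/negP => /det0P [v vn0 vS].
by move: (hpos v vn0); rewrite /ip vS mul0mx mxE ltxx.
Qed.
Lemma ef_nondeg u : euclidean_form S -> (forall v, ip S u v = 0) -> u = 0.
Proof.
case=> _ hpos h; apply/eqP; apply/negPn/negP => /hpos.
by rewrite h ltxx.
Qed.
End IP.
Section Br.
Variable R : realFieldType.
Variable n : nat.
Variable S : 'M[R]_n.
Variable br : 'rV[R]_n -> 'rV[R]_n -> 'rV[R]_n.
Variables (mu : R) (b : 'rV[R]_n) (K D : 'M[R]_n).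
Hypothesis brL : forall (a : R) u v w, br (a *: u + v) w = a *: br u w + br v w.
Hypothesis brR : forall (a : R) u v w, br u (a *: v + w) = a *: br u v + br u w.
Implicit Types (u v w : 'rV[R]_n).

Lemma br0r u : br u 0 = 0.
Proof.
have h := brR 1 u 0 0; rewrite !scale1r addr0 in h.
by have := congr1 (fun t => t - br u 0) h; rewrite /= subrr -addrA subrr addr0 => <-.
Qed.
Lemma br0l u : br 0 u = 0.
Proof.
have h := brL 1 0 0 u; rewrite !scale1r addr0 in h.
by have := congr1 (fun t => t - br 0 u) h; rewrite /= subrr -addrA subrr addr0 => <-.
Qed.
Lemma brDr u v w : br u (v + w) = br u v + br u w.
Proof. by have := brR 1 u v w; rewrite !scale1r. Qed.
Lemma brZr k u v : br u (k *: v) = k *: br u v.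
Proof. by have := brR k u v 0; rewrite !addr0 br0r addr0. Qed.
Lemma brNr u v : br u (- v) = - br u v.
Proof. by rewrite -scaleN1r brZr scaleN1r. Qed.
Lemma brBr u v w : br u (v - w) = br u v - br u w.
Proof. by rewrite brDr brNr. Qed.
Lemma brDl u v w : br (u + v) w = br u w + br v w.
Proof. by have := brL 1 u v w; rewrite !scale1r. Qed.
Lemma brZl k u v : br (k *: u) v = k *: br u v.
Proof. by have := brL k u 0 v; rewrite !addr0 br0l addr0. Qed.
Lemma brNl u v : br (- u) v = - br u v.
Proof. by rewrite -scaleN1r brZl scaleN1r. Qed.
Lemma brBl u v w : br (u - v) w = br u w - br v w.
Proof. by rewrite brDl brNl. Qed.

Notation gb := (gbr S br mu b K D).

Lemma gbr_gmk a u c a' v c' : gb (gmk a u c) (gmk a' v c') =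
  gmk (mu * (c * a' - a * c') + c * ip S b v - c' * ip S b u + ip S (u *m K) v)
      (br u v + c *: (v *m D) - c' *: (u *m D)) 0.
Proof. by rewrite /gbr !gmk_ge !gmk_g0p !gmk_gbar. Qed.

Definition der' v w := br v w *m D - br v (w *m D) + br w (v *m D).
Definition Xf v w := mu * ip S (v *m K) w + ip S b (br v w) - ip S (v *m K) (w *m D)
   + ip S (w *m K) (v *m D).
Definition Cf u v w := ip S (u *m K) (br v w) + ip S (v *m K) (br w u) + ip S (w *m K) (br u v).
Definition jac u v w := br u (br v w) + br v (br w u) + br w (br u v).

Lemma jac_formula a u c a' v c' a'' w c'' :
  let x := gmk a u c in let y := gmk a' v c' in let z := gmk a'' w c'' in
  gb x (gb y z) + gb y (gb z x) + gb z (gb x y) =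
  gmk (Cf u v w + c * Xf v w + c' * Xf w u + c'' * Xf u v)
      (jac u v w + c *: der' v w + c' *: der' w u + c'' *: der' u v) 0.
Proof.
rewrite /= !gbr_gmk !gmk_add; congr gmk; last by rewrite !addr0.
  rewrite /Cf /Xf !(ipDr, ipNr, ipZr).
  ring.
rewrite /jac /der' !(brDr, brNr, brZr) !(mulmxDl, mulNmx) -!scalemxAl.
apply/rowP => j; rewrite !mxE.
ring.
Qed.
End Br.
Section Tr.
Variable R : realFieldType.
Variable n : nat.
Variable S : 'M[R]_n.
Variable br : 'rV[R]_n -> 'rV[R]_n -> 'rV[R]_n.
Variables (mu : R) (b : 'rV[R]_n) (K D : 'M[R]_n).
Hypothesis brL : forall (a : R) u v w, br (a *: u + v) w = a *: br u w + br v w.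
Hypothesis brR : forall (a : R) u v w, br u (a *: v + w) = a *: br u v + br u w.

Lemma tr_lin1 m (f : 'rV[R]_m -> 'rV[R]_m) : \tr (lin1_mx f) = \sum_i f (delta_mx 0 i) 0 i.
Proof. by rewrite /mxtrace; apply: eq_bigr => i _; rewrite mxE. Qed.

Lemma D1 : delta_mx 0 (lshift 1 (lshift n (@ord0 0))) = gmk 1 (0 : 'rV[R]_n) 0.
Proof.
rewrite !delta_mx_lshift /gmk raddf0; congr row_mx; congr row_mx.
by apply/rowP => i; rewrite !mxE !ord1.
Qed.
Lemma D2 (j : 'I_n) : delta_mx 0 (lshift 1 (rshift 1 j)) = gmk (0 : R) (delta_mx 0 j) 0.
Proof. by rewrite delta_mx_lshift delta_mx_rshift /gmk raddf0. Qed.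
Lemma D3 : delta_mx 0 (rshift (1 + n) (@ord0 0)) = gmk (0 : R) (0 : 'rV[R]_n) 1.
Proof.
rewrite delta_mx_rshift /gmk raddf0 row_mx0; congr row_mx.
by apply/rowP => i; rewrite !mxE !ord1.
Qed.
Lemma gmk_at1 (a c : R) (u : 'rV[R]_n) : (gmk a u c) 0 (lshift 1 (lshift n (@ord0 0))) = a.
Proof. by rewrite /gmk !row_mxEl mxE eqxx mulr1n. Qed.
Lemma gmk_at2 (a c : R) (u : 'rV[R]_n) j : (gmk a u c) 0 (lshift 1 (rshift 1 j)) = u 0 j.
Proof. by rewrite /gmk row_mxEl row_mxEr. Qed.
Lemma gmk_at3 (a c : R) (u : 'rV[R]_n) : (gmk a u c) 0 (rshift (1 + n) (@ord0 0)) = c.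
Proof. by rewrite /gmk row_mxEr mxE eqxx mulr1n. Qed.

Lemma tr_adg x : \tr (adg S br mu b K D x) = (mu + \tr D) * gbar x + \tr (ad0 br (g0p x)).
Proof.
rewrite [x]gmk_eta; move: (ge x) (g0p x) (gbar x) => a u c; rewrite gmk_g0p gmk_gbar.
rewrite /adg /ad0 !tr_lin1 big_split_ord /= big_split_ord /= !big_ord1.
rewrite D1 D3 !gbr_gmk gmk_at1 gmk_at3.
under eq_bigr => j _ do rewrite D2 gbr_gmk gmk_at2 -rowE !mxE mul0r subr0.
rewrite big_split /= -mulr_sumr /mxtrace !ip0r.
ring.
Qed.
End Tr.
Unset Implicit Arguments. Set Strict Implicit.
Section Main.
Variable R : realFieldType.
Variable n : nat.
Variable S : 'M[R]_n.
Variable br : 'rV[R]_n -> 'rV[R]_n -> 'rV[R]_n.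
Variables (mu : R) (b : 'rV[R]_n) (K D : 'M[R]_n).
Hypothesis brL : forall (a : R) u v w, br (a *: u + v) w = a *: br u w + br v w.
Hypothesis brR : forall (a : R) u v w, br u (a *: v + w) = a *: br u v + br u w.
Hypothesis brA : forall u, br u u = 0.
Hypothesis hS : S^T = S.
Hypothesis hU : S \in unitmx.
Hypothesis hK : adj S K = - K.
Hypothesis hE : euclidean_form S.
Hypothesis brJ : forall u v w, br u (br v w) + br v (br w u) + br w (br u v) = 0.
Implicit Types (u v w : 'rV[R]_n).

Lemma brS u v : br u v = - br v u.
Proof.
have := brA (u + v); rewrite (brDl brL) !(brDr brR) !brA add0r addr0.
by move/eqP; rewrite addr_eq0 => /eqP.
Qed.

Lemma Kskew u v : ip S (u *m K) v = - ip S (v *m K) u.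
Proof.
have := ip_adj K u v hU; rewrite hK mulmxN ipNl => h.
by rewrite -[LHS]opprK h (ip_sym _ _ hS).
Qed.

Lemma lin_br u v : v *m ad0 br u = br u v.
Proof.
rewrite [v in RHS]row_sum_delta (big_morph _ (brDr brR u) (br0r brR u)).
apply/rowP=> i; rewrite mxE summxE; apply: eq_bigr => j _.
by rewrite (brZr brR) !mxE.
Qed.

Lemma Xf_T u v :
  ip S ((u *m D) *m K + (u *m K) *m adj S D - (mu *: (u *m K) + J0 S br b u)) v
  = - Xf S br mu b K D u v.
Proof.
rewrite /Xf /J0 !(ipDl, ipNl, ipZl) !(ip_adj _ _ _ hU) lin_br (Kskew (u *m D)).
ring.
Qed.

Notation gb := (gbr S br mu b K D).

Lemma gb_linL k x y z : gb (k *: x + y) z = k *: gb x z + gb y z.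
Proof.
rewrite [x]gmk_eta [y]gmk_eta [z]gmk_eta.
rewrite !gmk_scale !gmk_add ?gbr_gmk ?gmk_scale ?gmk_add !gmk_ge !gmk_g0p !gmk_gbar; congr gmk.
- rewrite !mulmxDl -!scalemxAl !(ipDl, ipZl, ipDr, ipZr). ring.
- rewrite (brDl brL) (brZl brL) !(mulmxDl, scalerDr) -!scalemxAl.
  apply/rowP => j; rewrite !mxE; ring.
- ring.
Qed.

Lemma gb_linR k x y z : gb z (k *: x + y) = k *: gb z x + gb z y.
Proof.
rewrite [x]gmk_eta [y]gmk_eta [z]gmk_eta.
rewrite !gmk_scale !gmk_add ?gbr_gmk ?gmk_scale ?gmk_add !gmk_ge !gmk_g0p !gmk_gbar; congr gmk.
- rewrite !(ipDl, ipZl, ipDr, ipZr). ring.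
- rewrite (brDr brR) (brZr brR) !(mulmxDl, scalerDr) -!scalemxAl.
  apply/rowP => j; rewrite !mxE; ring.
- ring.
Qed.

Lemma gb_alt x : gb x x = 0.
Proof.
rewrite [x]gmk_eta gbr_gmk -(gmk0 R n); congr gmk.
- have h := Kskew (g0p x) (g0p x).
  have -> : ip S (g0p x *m K) (g0p x) = 0.
    by move/eqP: h; rewrite -addr_eq0 -mulr2n mulrn_eq0 /= => /eqP.
  ring.
- by rewrite brA add0r subrr.
Qed.

Lemma jac_eq0 a u c a' v c' a'' w c'' :
  let x := gmk a u c in let y := gmk a' v c' in let z := gmk a'' w c'' in
  gb x (gb y z) + gb y (gb z x) + gb z (gb x y) = 0 ->
  Cf S br K u v w + c * Xf S br mu b K D v w + c' * Xf S br mu b K D w u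
    + c'' * Xf S br mu b K D u v = 0
  /\ jac br u v w + c *: der' br D v w + c' *: der' br D w u + c'' *: der' br D u v = 0.
Proof.
move=> x y z; rewrite (jac_formula S mu b K D brR) -(gmk0 R n) => /gmk_inj [h1 h2 _]; by split.
Qed.

Lemma Cf_coc u v w : Cf S br K u v w = -
  (ip S (br u v *m K) w + ip S (br v w *m K) u + ip S (br w u *m K) v).
Proof.
rewrite /Cf (Kskew (br u v)) (Kskew (br v w)) (Kskew (br w u)). ring.
Qed.

Lemma der_eq u v : (der' br D u v = 0) <-> (br u v *m D = br (u *m D) v + br u (v *m D)).
Proof.
rewrite /der' (brS v (u *m D)); split.
- move=> h; apply/rowP => j; have := congr1 (fun M : 'rV_n => M 0 j) h.
  rewrite !mxE; lra.
- move=> ->; apply/rowP => j; rewrite !mxE; ring.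
Qed.

Lemma part1 :
  (is_lie gb <->
     [/\ derivation br D,
         cocycle2 br (fun u v => ip S (u *m K) v) &
         (forall u, (u *m D) *m K + (u *m K) *m adj S D = mu *: (u *m K) + J0 S br b u)]).
Proof.
split.
- case=> _ _ _ gJ.
  have hX : forall u v, Xf S br mu b K D u v = 0.
    move=> u v; have [h _] := jac_eq0 0 0 1 0 u 0 0 v 0 (gJ _ _ _).
    move: h; rewrite /Cf !mul0mx !ip0l (br0r brR) (br0l brL) !ip0r; lra.
  split.
  + move=> u v; apply/der_eq.
    have [_ h] := jac_eq0 0 0 1 0 u 0 0 v 0 (gJ _ _ _).
    move: h; rewrite /jac (br0r brR) !(br0l brL) !(br0r brR) !scale0r scale1r !addr0 !add0r.
    done.
  + move=> u v w; have [h _] := jac_eq0 0 u 0 0 v 0 0 w 0 (gJ _ _ _).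
    move: h; rewrite Cf_coc !mul0r !addr0 => /eqP; rewrite oppr_eq0 => /eqP.
    done.
  + move=> u; apply/eqP; rewrite -subr_eq0; apply/eqP; apply: (ef_nondeg hE) => v.
    by rewrite Xf_T hX oppr0.
- case=> hder hcoc hT.
  have hX : forall u v, Xf S br mu b K D u v = 0.
    by move=> u v; rewrite -[LHS]opprK -Xf_T hT subrr ip0l oppr0.
  have hD : forall u v, der' br D u v = 0 by move=> u v; apply/der_eq/hder.
  split; [exact: gb_linL | move=> ? ? ? ?; exact: gb_linR | exact: gb_alt |].
  move=> x y z; rewrite [x]gmk_eta [y]gmk_eta [z]gmk_eta (jac_formula S mu b K D brR).
  rewrite Cf_coc hcoc oppr0 !hX !hD /jac brJ !mulr0 !scaler0 !addr0.
  exact: gmk0.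
Qed.
End Main.

Theorem proposition4p1 (R : realFieldType) (n : nat) (S : 'M[R]_n)
  (br : 'rV[R]_n -> 'rV[R]_n -> 'rV[R]_n) (mu : R) (b : 'rV[R]_n) (K D : 'M[R]_n) :
  euclidean_form S -> is_lie br -> skew_sym S K ->
  (* (1) *)
  (is_lie (gbr S br mu b K D) <->
     [/\ derivation br D,
         cocycle2 br (fun u v => ip S (u *m K) v) &
         (forall u, (u *m D) *m K + (u *m K) *m adj S D = mu *: (u *m K) + J0 S br b u)])
  /\
  (* (2) *)
  (is_lie (gbr S br mu b K D) ->
     (forall (H : 'rV[R]_(1 + n + 1)) (H0 : 'rV[R]_n),
        (forall x, \tr (adg S br mu b K D x) = lform S H x) ->
        (forall v, \tr (ad0 br v) = ip S H0 v) ->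
        H = gmk (mu + \tr D) H0 0)
     /\
     (unimodular (fun x => \tr (adg S br mu b K D x)) <->
        unimodular (fun v => \tr (ad0 br v)) /\ \tr D = - mu)).
Proof.
move=> hE hlie hK; have [hS _] := hE; have hU := ef_unit hE.
case: hlie => brL brR brA brJ.
split; first by apply: part1.
move=> _.
have htr x : \tr (adg S br mu b K D x) = (mu + \tr D) * gbar x + \tr (ad0 br (g0p x)).
  by apply: tr_adg.
have h00 : \tr (ad0 br 0) = 0.
  by rewrite /ad0 tr_lin1 big1 // => j _; rewrite (br0l brL) mxE.
split.
- move=> H H0 hH hH0; rewrite [H]gmk_eta; congr gmk.
  + have := hH (gmk 0 0 1); rewrite htr /lform !gmk_ge !gmk_g0p !gmk_gbar h00 ip0r.
    lra.
  + apply/eqP; rewrite -subr_eq0; apply/eqP; apply: (ef_nondeg hE) => v.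
    rewrite ipBl; have := hH (gmk 0 v 0); rewrite htr /lform !gmk_ge !gmk_g0p !gmk_gbar hH0.
    lra.
  + have := hH (gmk 1 0 0); rewrite htr /lform !gmk_ge !gmk_g0p !gmk_gbar h00 ip0r.
    lra.
- split.
  + move=> hu; split.
      by move=> v; have := hu (gmk 0 v 0); rewrite htr gmk_gbar gmk_g0p mulr0 add0r.
    have := hu (gmk 0 0 1); rewrite htr gmk_gbar gmk_g0p h00 mulr1 addr0 => h.
    lra.
  + by case=> hu htrD x; rewrite htr hu htrD addrN mul0r addr0.
Qed.
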